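(* Let $a,b\in C\ell_2\setminus\mathbb{R}$ with $a_0=b_0$ and $G(a)=G(b)$, and let $F=L(a)-R(b)$. Then the Moore–Penrose inverse of the real matrix $F$ is $$F^+=\frac{L(a')-R(b')}{2(|Cim(a)|^2+|Cim(b)|^2)}.$$
   Context: $C\ell_2$ is the 4-dimensional real associative algebra with basis $1,e_1,e_2,e_3$ and multiplication $e_1^2=e_2^2=1$, $e_3^2=-1$, $e_1e_2=e_3=-e_2e_1$, $e_1e_3=e_2=-e_3e_1$, $e_3e_2=e_1=-e_2e_3$; $\mathbb{R}$ is identified with $\mathbb{R}\cdot 1$. Write $a=a_0+a_1e_1+a_2e_2+a_3e_3$, $b=b_0+b_1e_1+b_2e_2+b_3e_3$. Notation: $a'=a_0+a_1e_1+a_2e_2-a_3e_3$, $G(a)=a_1^2+a_2^2-a_3^2$, $|Cim(a)|^2=a_1^2+a_2^2+a_3^2$, $$L(a)=\begin{pmatrix} a_0&a_1&a_2&-a_3\\ a_1&a_0&a_3&-a_2\\ a_2&-a_3&a_0&a_1\\ a_3&-a_2&a_1&a_0\end{pmatrix},\qquad R(a)=\begin{pmatrix} a_0&a_1&a_2&-a_3\\ a_1&a_0&-a_3&a_2\\ a_2&a_3&a_0&-a_1\\ a_3&a_2&-a_1&a_0\end{pmatrix}.$$ The Moore–Penrose inverse $F^+$ of a real matrix $F$ is the unique $X$ with $FXF=F$, $XFX=X$, $(FX)^T=FX$, $(XF)^T=XF$. *)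

(* Defs.v *)
From mathcomp Require Import all_boot all_order all_algebra.
Set Implicit Arguments. Unset Strict Implicit. Unset Printing Implicit Defensive.
Import Order.TTheory GRing.Theory Num.Theory.
Local Open Scope ring_scope.

(* Elements of Cl_2 : a = a0 + a1 e1 + a2 e2 + a3 e3 *)
Record cl2 (R : Type) := Cl2 { c0 : R; c1 : R; c2 : R; c3 : R }.

Section Cl2.
Variable R : realFieldType.

Definition cl2_nonreal (a : cl2 R) : Prop :=
  ~ (c1 a = 0 /\ c2 a = 0 /\ c3 a = 0).

Definition cl2_prime (a : cl2 R) : cl2 R := Cl2 (c0 a) (c1 a) (c2 a) (- c3 a).

Definition cl2_G (a : cl2 R) : R := c1 a ^+ 2 + c2 a ^+ 2 - c3 a ^+ 2.

Definition cl2_Cim2 (a : cl2 R) : R := c1 a ^+ 2 + c2 a ^+ 2 + c3 a ^+ 2.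

Definition mx4 (m : nat -> nat -> R) : 'M[R]_4 := \matrix_(i < 4, j < 4) m i j.

Definition Lmx (a : cl2 R) : 'M[R]_4 :=
  let: Cl2 a0 a1 a2 a3 := a in
  mx4 (fun i j =>
    match i, j with
    | 0, 0 => a0 | 0, 1 => a1 | 0, 2 => a2 | 0, _ => - a3
    | 1, 0 => a1 | 1, 1 => a0 | 1, 2 => a3 | 1, _ => - a2
    | 2, 0 => a2 | 2, 1 => - a3 | 2, 2 => a0 | 2, _ => a1
    | _, 0 => a3 | _, 1 => - a2 | _, 2 => a1 | _, _ => a0
    end)%N.

Definition Rmx (a : cl2 R) : 'M[R]_4 :=
  let: Cl2 a0 a1 a2 a3 := a in
  mx4 (fun i j =>
    match i, j with
    | 0, 0 => a0 | 0, 1 => a1 | 0, 2 => a2 | 0, _ => - a3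
    | 1, 0 => a1 | 1, 1 => a0 | 1, 2 => - a3 | 1, _ => a2
    | 2, 0 => a2 | 2, 1 => a3 | 2, 2 => a0 | 2, _ => - a1
    | _, 0 => a3 | _, 1 => a2 | _, 2 => - a1 | _, _ => a0
    end)%N.

End Cl2.

Definition is_MP_inverse (R : realFieldType) (m n : nat)
  (F : 'M[R]_(m, n)) (X : 'M[R]_(n, m)) : Prop :=
  [/\ F *m X *m F = F, X *m F *m X = X,
      (F *m X)^T = F *m X & (X *m F)^T = X *m F].

(* Main.v *)
Require Import Defs.
From mathcomp Require Import all_boot all_order all_algebra ring lra.
Import Order.TTheory GRing.Theory Num.Theory.
Local Open Scope ring_scope.

Section S.
Variable R : realFieldType.
Definition o0 : 'I_4 := @Ordinal 4 0 isT.
Definition o1 : 'I_4 := @Ordinal 4 1 isT.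
Definition o2 : 'I_4 := @Ordinal 4 2 isT.
Definition o3 : 'I_4 := @Ordinal 4 3 isT.

Lemma mul4E (A B : 'M[R]_4) i j :
  (A *m B) i j = A i o0 * B o0 j + A i o1 * B o1 j + A i o2 * B o2 j + A i o3 * B o3 j.
Proof.
rewrite mxE !big_ord_recr big_ord0 /= add0r.
by congr (_ + _ + _ + _); congr (A i _ * B _ j); apply/val_inj.
Qed.

Lemma ord4P (P : 'I_4 -> Prop) : P o0 -> P o1 -> P o2 -> P o3 -> forall i, P i.
Proof.
move=> H0 H1 H2 H3 [[|[|[|[|i]]]] Hi] //.
- by have -> : Ordinal Hi = o0 by apply/val_inj.
- by have -> : Ordinal Hi = o1 by apply/val_inj.
- by have -> : Ordinal Hi = o2 by apply/val_inj.
- by have -> : Ordinal Hi = o3 by apply/val_inj.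
Qed.

Definition Lf (a : cl2 R) (i j : nat) : R :=
  let: Cl2 a0 a1 a2 a3 := a in
    match i, j with
    | 0, 0 => a0 | 0, 1 => a1 | 0, 2 => a2 | 0, _ => - a3
    | 1, 0 => a1 | 1, 1 => a0 | 1, 2 => a3 | 1, _ => - a2
    | 2, 0 => a2 | 2, 1 => - a3 | 2, 2 => a0 | 2, _ => a1
    | _, 0 => a3 | _, 1 => - a2 | _, 2 => a1 | _, _ => a0
    end%N.
Definition Rf (a : cl2 R) (i j : nat) : R :=
  let: Cl2 a0 a1 a2 a3 := a in
    match i, j with
    | 0, 0 => a0 | 0, 1 => a1 | 0, 2 => a2 | 0, _ => - a3
    | 1, 0 => a1 | 1, 1 => a0 | 1, 2 => - a3 | 1, _ => a2
    | 2, 0 => a2 | 2, 1 => a3 | 2, 2 => a0 | 2, _ => - a1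
    | _, 0 => a3 | _, 1 => a2 | _, 2 => - a1 | _, _ => a0
    end%N.
Lemma LmxE a (i j : 'I_4) : Lmx a i j = Lf a i j.
Proof. by case: a => *; rewrite /Lmx /mx4 mxE. Qed.
Lemma RmxE a (i j : 'I_4) : Rmx a i j = Rf a i j.
Proof. by case: a => *; rewrite /Rmx /mx4 mxE. Qed.
Lemma subE (A B : 'M[R]_4) i j : (A - B) i j = A i j - B i j.
Proof. by rewrite !mxE. Qed.
Lemma sclE (A : 'M[R]_4) k i j : (k *: A) i j = k * A i j.
Proof. by rewrite !mxE. Qed.

Lemma FMF (a0 a1 a2 a3 b1 b2 b3 : R) :
  b3 ^+ 2 = b1 ^+ 2 + b2 ^+ 2 - a1 ^+ 2 - a2 ^+ 2 + a3 ^+ 2 ->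
  (Lmx (Cl2 a0 a1 a2 a3) - Rmx (Cl2 a0 b1 b2 b3)) *m (Lmx (Cl2 a0 a1 a2 (-a3)) - Rmx (Cl2 a0 b1 b2 (-b3))) *m (Lmx (Cl2 a0 a1 a2 a3) - Rmx (Cl2 a0 b1 b2 b3)) = (2 * (cl2_Cim2 (Cl2 a0 a1 a2 a3) + cl2_Cim2 (Cl2 a0 b1 b2 b3))) *: (Lmx (Cl2 a0 a1 a2 a3) - Rmx (Cl2 a0 b1 b2 b3)).
Proof.
move=> h; apply/matrixP; elim/ord4P; elim/ord4P;
rewrite !mul4E ?sclE !subE !LmxE !RmxE /cl2_Cim2 /=;
cbv beta iota delta [Lf Rf o0 o1 o2 o3 nat_of_ord c1 c2 c3 c0]; ring: h.
Qed.

Lemma MFM (a0 a1 a2 a3 b1 b2 b3 : R) :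
  b3 ^+ 2 = b1 ^+ 2 + b2 ^+ 2 - a1 ^+ 2 - a2 ^+ 2 + a3 ^+ 2 ->
  (Lmx (Cl2 a0 a1 a2 (-a3)) - Rmx (Cl2 a0 b1 b2 (-b3))) *m (Lmx (Cl2 a0 a1 a2 a3) - Rmx (Cl2 a0 b1 b2 b3)) *m (Lmx (Cl2 a0 a1 a2 (-a3)) - Rmx (Cl2 a0 b1 b2 (-b3))) = (2 * (cl2_Cim2 (Cl2 a0 a1 a2 a3) + cl2_Cim2 (Cl2 a0 b1 b2 b3))) *: (Lmx (Cl2 a0 a1 a2 (-a3)) - Rmx (Cl2 a0 b1 b2 (-b3))).
Proof.
move=> h; apply/matrixP; elim/ord4P; elim/ord4P;
rewrite !mul4E ?sclE !subE !LmxE !RmxE /cl2_Cim2 /=;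
cbv beta iota delta [Lf Rf o0 o1 o2 o3 nat_of_ord c1 c2 c3 c0]; ring: h.
Qed.

Lemma FMs (a0 a1 a2 a3 b1 b2 b3 : R) :
  b3 ^+ 2 = b1 ^+ 2 + b2 ^+ 2 - a1 ^+ 2 - a2 ^+ 2 + a3 ^+ 2 ->
  ((Lmx (Cl2 a0 a1 a2 a3) - Rmx (Cl2 a0 b1 b2 b3)) *m (Lmx (Cl2 a0 a1 a2 (-a3)) - Rmx (Cl2 a0 b1 b2 (-b3))))^T = (Lmx (Cl2 a0 a1 a2 a3) - Rmx (Cl2 a0 b1 b2 b3)) *m (Lmx (Cl2 a0 a1 a2 (-a3)) - Rmx (Cl2 a0 b1 b2 (-b3))).
Proof.
move=> h; apply/matrixP => i j; rewrite [LHS]mxE; move: i j; elim/ord4P; elim/ord4P;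
rewrite !mul4E !subE !LmxE !RmxE /cl2_Cim2 /=;
cbv beta iota delta [Lf Rf o0 o1 o2 o3 nat_of_ord c1 c2 c3 c0]; ring: h.
Qed.

Lemma MFs (a0 a1 a2 a3 b1 b2 b3 : R) :
  b3 ^+ 2 = b1 ^+ 2 + b2 ^+ 2 - a1 ^+ 2 - a2 ^+ 2 + a3 ^+ 2 ->
  ((Lmx (Cl2 a0 a1 a2 (-a3)) - Rmx (Cl2 a0 b1 b2 (-b3))) *m (Lmx (Cl2 a0 a1 a2 a3) - Rmx (Cl2 a0 b1 b2 b3)))^T = (Lmx (Cl2 a0 a1 a2 (-a3)) - Rmx (Cl2 a0 b1 b2 (-b3))) *m (Lmx (Cl2 a0 a1 a2 a3) - Rmx (Cl2 a0 b1 b2 b3)).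
Proof.
move=> h; apply/matrixP => i j; rewrite [LHS]mxE; move: i j; elim/ord4P; elim/ord4P;
rewrite !mul4E !subE !LmxE !RmxE /cl2_Cim2 /=;
cbv beta iota delta [Lf Rf o0 o1 o2 o3 nat_of_ord c1 c2 c3 c0]; ring: h.
Qed.


Lemma Cim2_gt0 (a : cl2 R) : cl2_nonreal a -> 0 < cl2_Cim2 a.
Proof.
case: a => a0 a1 a2 a3; rewrite /cl2_nonreal /cl2_Cim2 /= => H.
rewrite lt_def; apply/andP; split; last by rewrite !addr_ge0 ?sqr_ge0.
apply/negP => /eqP E; apply: H.
move/eqP: E; rewrite paddr_eq0 ?addr_ge0 ?sqr_ge0 // paddr_eq0 ?sqr_ge0 //.
by rewrite !sqrf_eq0 => /andP[/andP[/eqP -> /eqP ->] /eqP ->].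
Qed.
End S.

Theorem lemma5p2 (R : realFieldType) (a b : cl2 R) :
  cl2_nonreal a -> cl2_nonreal b ->
  c0 a = c0 b -> cl2_G a = cl2_G b ->
  is_MP_inverse (Lmx a - Rmx b)
    ((2 * (cl2_Cim2 a + cl2_Cim2 b))^-1 *: (Lmx (cl2_prime a) - Rmx (cl2_prime b))).
Proof.
move=> /Cim2_gt0 Ha /Cim2_gt0 Hb.
case: a Ha => a0 a1 a2 a3 Ha; case: b Hb => b0 b1 b2 b3 Hb /= E; subst b0.
rewrite /cl2_G /= => HG.
have h : b3 ^+ 2 = b1 ^+ 2 + b2 ^+ 2 - a1 ^+ 2 - a2 ^+ 2 + a3 ^+ 2.
  by apply/eqP; rewrite -subr_eq0; apply/eqP; rewrite -[LHS]/(_) ; lra.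
have s0 : 2 * (cl2_Cim2 (Cl2 a0 a1 a2 a3) + cl2_Cim2 (Cl2 a0 b1 b2 b3)) != 0.
  by rewrite mulf_neq0 // gt_eqF // addr_gt0.
set s := 2 * _ in s0 *.
rewrite /cl2_prime /=.
have k1 : s^-1 * s = 1 by rewrite mulVf.
split.
- by rewrite -scalemxAr -scalemxAl FMF // scalerA k1 scale1r.
- rewrite -scalemxAl -scalemxAl -scalemxAr MFM // !scalerA.
  by congr (_ *: _); rewrite -mulrA k1 mulr1.
- by rewrite -scalemxAr linearZ /= FMs.
- by rewrite -scalemxAl linearZ /= MFs.
Qed.
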